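(* Let $f,g\in\mathbb{F}[Y,Z]$. If $g$ is a linear form, then $\mathrm{maxrank}(M_{fg})\le 2\cdot\mathrm{maxrank}(M_f)$.
   Context: $\mathbb{F}$ is a field, $Y=\{y_1,\dots,y_m\}$ and $Z=\{z_1,\dots,z_m\}$ are disjoint sets of variables. For $f\in\mathbb{F}[Y,Z]$, the polynomial coefficient matrix $M_f$ is the $2^m\times 2^m$ matrix with entries in $\mathbb{F}[Y,Z]$, rows indexed by monic multilinear monomials $p$ in $Y$ and columns by monic multilinear monomials $q$ in $Z$, where $M_f(p,q)=G$ if and only if $f$ can be uniquely written as $f=pq\,G+Q$ with $G$ containing no variable other than those present in $p$ and $q$, and $Q$ having no monomial which is divisible by $pq$ and contains only variables present in $p$ and $q$. For $S:Y\cup Z\to\mathbb{F}$, $M_f|_S$ is obtained by evaluating each entry at $S$, and $\mathrm{maxrank}(M_f)=\max_S\mathrm{rank}(M_f|_S)$. *)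

(* Defs.v *)
From mathcomp Require Import all_boot all_algebra.
From mathcomp Require Export mpoly.
From Stdlib Require Import ClassicalEpsilon.
Set Implicit Arguments. Unset Strict Implicit. Unset Printing Implicit Defensive.
Import GRing.Theory.
Local Open Scope ring_scope.

(* Variables: Y = {y_1..y_m} are the variables 'X_(lshift m i), i : 'I_m;
   Z = {z_1..z_m} are the variables 'X_(rshift m j), j : 'I_m.
   So F[Y,Z] = {mpoly F[m + m]}. *)

(* A monic multilinear monomial in Y (resp. Z) is identified with its set of
   variables A : {set 'I_m}. *)

Definition pqvars (m : nat) (A B : {set 'I_m}) : {set 'I_(m + m)} :=
  (@lshift m m @: A) :|: (@rshift m m @: B).

Definition pqmnm (m : nat) (A B : {set 'I_m}) : 'X_{1..(m + m)} :=
  [multinom (i \in pqvars A B : nat) | i < m + m].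

Definition mnmvars (n : nat) (mu : 'X_{1..n}) : {set 'I_n} :=
  [set i | mu i != 0%N].

(* Entry M_f(p,q) = G, where f = p q G + Q uniquely with G only in the variables
   of p q and Q having no monomial divisible by p q using only variables of p q.
   Explicitly: the monomials of f that are divisible by pq and contain only the
   variables of pq are exactly those whose variable set equals vars(pq); G is
   the sum of these terms divided by pq. *)
Definition pcm_entry (F : fieldType) (m : nat) (f : {mpoly F[m + m]})
    (A B : {set 'I_m}) : {mpoly F[m + m]} :=
  \sum_(mu <- msupp f | mnmvars mu == pqvars A B)
     f@_mu *: 'X_[(mu - pqmnm A B)%MM].

Definition nmon (m : nat) : nat := #|{: {set 'I_m}}|.

(* The polynomial coefficient matrix M_f, rows/columns indexed by the
   enumeration of {set 'I_m} (monic multilinear monomials in Y resp. Z). *)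
Definition pcm (F : fieldType) (m : nat) (f : {mpoly F[m + m]})
    : 'M[{mpoly F[m + m]}]_(nmon m) :=
  \matrix_(i < nmon m, j < nmon m)
     pcm_entry f (enum_val (i : 'I_#|{: {set 'I_m}}|))
                 (enum_val (j : 'I_#|{: {set 'I_m}}|)).

Definition pcm_eval (F : fieldType) (m : nat) (f : {mpoly F[m + m]})
    (S : 'I_(m + m) -> F) : 'M[F]_(nmon m) :=
  map_mx (meval S) (pcm f).

(* maxrank(M_f) = max_S rank(M_f|_S); ranks are bounded by nmon m, so this
   max over the (classically decided) set of attained ranks is well defined. *)
Definition attained (F : fieldType) (m : nat) (f : {mpoly F[m + m]}) (r : nat)
    : bool :=
  if excluded_middle_informative
       (exists S : 'I_(m + m) -> F, \rank (pcm_eval f S) = r)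
  then true else false.

Definition maxrank (F : fieldType) (m : nat) (f : {mpoly F[m + m]}) : nat :=
  (\max_(r < (nmon m).+1 | attained f r) r)%N.

(* Main.v *)
Require Import Defs.
From mathcomp Require Import all_boot all_algebra.
From mathcomp Require Import mpoly.
From Stdlib Require Import ClassicalEpsilon.
Set Implicit Arguments. Unset Strict Implicit. Unset Printing Implicit Defensive.
Import GRing.Theory.
Local Open Scope ring_scope.

Section Gen.
Variables (F : fieldType) (n : nat).

Definition ind (T : {set 'I_n}) : 'X_{1..n} := [multinom (i \in T : nat) | i < n].
Definition EE (T : {set 'I_n}) (mu : 'X_{1..n}) : {mpoly F[n]} :=
  if mnmvars mu == T then 'X_[(mu - ind T)%MM] else 0.
Definition ent (T : {set 'I_n}) (p : {mpoly F[n]}) : {mpoly F[n]} :=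
  \sum_(mu <- msupp p) p@_mu *: EE T mu.

Lemma ent_seq T p (s : seq 'X_{1..n}) : uniq s -> {subset msupp p <= s} ->
  ent T p = \sum_(mu <- s) p@_mu *: EE T mu.
Proof.
move=> us sub; rewrite (bigID (fun mu => mu \in msupp p)) /=.
rewrite [X in _ + X]big1 ?addr0; last first.
  by move=> mu; rewrite -mcoeff_eq0 => /eqP ->; rewrite scale0r.
rewrite -big_filter /ent; apply: perm_big.
apply: uniq_perm; rewrite ?filter_uniq ?msupp_uniq //.
by move=> mu; rewrite mem_filter; case h: (mu \in msupp p) => //=; rewrite sub.
Qed.

Lemma entD T : {morph ent T : p q / p + q}.
Proof.
move=> p q; set s := undup (msupp p ++ msupp q ++ msupp (p + q)).
have us : uniq s by rewrite undup_uniq.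
rewrite (@ent_seq T (p + q) s) // ?(@ent_seq T p s) ?(@ent_seq T q s) //.
all: try by move=> mu h; rewrite mem_undup !mem_cat h ?orbT.
by rewrite -big_split /=; apply: eq_bigr => mu _; rewrite mcoeffD scalerDl.
Qed.

Lemma ent0 T : ent T 0 = 0.
Proof. by rewrite (@ent_seq T 0 [::]) ?big_nil // => mu; rewrite mcoeff_msupp mcoeff0 eqxx. Qed.

Lemma entZ T c p : ent T (c *: p) = c *: ent T p.
Proof.
set s := undup (msupp p ++ msupp (c *: p)).
have us : uniq s by rewrite undup_uniq.
rewrite (@ent_seq T (c *: p) s) // ?(@ent_seq T p s) //.
all: try by move=> mu h; rewrite mem_undup !mem_cat h ?orbT.
by rewrite scaler_sumr; apply: eq_bigr => mu _; rewrite mcoeffZ scalerA.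
Qed.

Lemma entX T mu : ent T 'X_[mu] = EE T mu.
Proof. by rewrite /ent msuppX big_seq1 mcoeffX eqxx scale1r. Qed.

Lemma XU (k : 'I_n) : 'X_k = 'X_[U_(k)] :> {mpoly F[n]}.
Proof. by []. Qed.

Lemma mnmvarsD1 mu (k : 'I_n) : mnmvars (mu + U_(k))%MM = mnmvars mu :|: [set k].
Proof.
apply/setP => i; rewrite !inE mnmDE mnm1E addn_eq0 negb_and eq_sym.
by rewrite [k == i]eq_sym; case: (i == k).
Qed.

Lemma EE_X T mu (k : 'I_n) : EE T (mu + U_(k))%MM =
  if k \in T then 'X_k * EE T mu + EE (T :\ k) mu else 0.
Proof.
rewrite /EE mnmvarsD1.
have kin : k \in mnmvars mu :|: [set k] by rewrite !inE eqxx orbT.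
case kT: (k \in T); last first.
  by case: eqP => // E; rewrite -E kin in kT.
case e1: (mnmvars mu == T).
  move/eqP: e1 => e1.
  have -> : mnmvars mu :|: [set k] == T.
    by rewrite e1; apply/eqP/setP => i; rewrite !inE; case: (eqVneq i k) => [->|]; rewrite ?kT ?orbF.
  have -> : (mnmvars mu == T :\ k) = false.
    apply/negP => /eqP h; have : k \in mnmvars mu by rewrite e1.
    by rewrite h !inE eqxx.
  rewrite addr0 -mpolyXD addmC; congr 'X_[_]; apply/mnmP => i.
  rewrite !mnmDE !mnmBE !mnmDE !mnmE.
  case iT: (i \in T) => /=; last by rewrite !subn0.
  have : i \in mnmvars mu by rewrite e1.
  by rewrite inE -lt0n => hi; rewrite addnBA.
case e2: (mnmvars mu == T :\ k).
  move/eqP: e2 => e2.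
  have -> : mnmvars mu :|: [set k] == T.
    rewrite e2; apply/eqP/setP => i; rewrite !inE.
    by case: (eqVneq i k) => [->|]; rewrite ?kT ?orbF.
  rewrite mulr0 add0r; congr 'X_[_]; apply/mnmP => i.
  rewrite !mnmBE !mnmDE !mnmE !inE.
  have hmu : (mu i != 0%N) = (i \in T :\ k) by rewrite -e2 inE.
  move: hmu; rewrite !inE.
  case: (eqVneq i k) => [->|ik] /=.
    by rewrite kT => /negbFE/eqP ->.
  by rewrite addn0.
case: (eqVneq (mnmvars mu :|: [set k]) T) => [E|_]; last by rewrite mulr0 addr0.
exfalso; move: e1 e2.
case kmu: (k \in mnmvars mu).
  have -> : mnmvars mu = T.
    rewrite -E; apply/setP => i; rewrite in_setU in_set1.
    by case: (eqVneq i k) => [->|]; rewrite ?kmu ?orbF.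
  by rewrite eqxx.
have -> : mnmvars mu = T :\ k.
  rewrite -E; apply/setP => i; rewrite in_setD1 in_setU in_set1.
  by case: (eqVneq i k) => [->|]; rewrite ?kmu ?orbF.
by rewrite eqxx.
Qed.
End Gen.

Section Gen2.
Variables (F : fieldType) (n : nat).

Lemma ent_sum T I (r : seq I) (P : pred I) (h : I -> {mpoly F[n]}) :
  ent T (\sum_(i <- r | P i) h i) = \sum_(i <- r | P i) ent T (h i).
Proof. exact: (big_morph _ (@entD F n T) (@ent0 F n T)). Qed.

Lemma ent_mulX T (p : {mpoly F[n]}) k : ent T (p * 'X_k) =
  if k \in T then 'X_k * ent T p + ent (T :\ k) p else 0.
Proof.
rewrite {1}(mpolyE p) mulr_suml ent_sum.
under eq_bigr => mu _ do rewrite -scalerAl -mpolyXD entZ entX EE_X.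
case: (k \in T); last by rewrite big1 // => mu _; rewrite scaler0.
rewrite /ent mulr_sumr -big_split /=; apply: eq_bigr => mu _.
by rewrite scalerDr scalerAr.
Qed.

Lemma homog1E (g : {mpoly F[n]}) : g \is @ishomog1 n F 1 mdeg ->
  g = \sum_(k < n) g@_U_(k) *: 'X_k.
Proof.
move=> hg; apply/mpolyP => mu.
rewrite raddf_sum /=.
under eq_bigr => k _ do rewrite mcoeffZ mcoeffX.
case h: (mdeg mu == 1%N).
  case/mdeg1P: h => i /eqP ->.
  rewrite (bigD1 i) //= eqxx mulr1 big1 ?addr0 // => j ji.
  by rewrite eq_mnm1 (negbTE ji) mulr0.
rewrite (dhomog_nemf_coeff hg) ?h //.
rewrite big1 // => k _.
case: eqP => [E|_]; last by rewrite mulr0.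
by move: h; rewrite -E mdeg1.
Qed.

Lemma ent_mul_lin T (p g : {mpoly F[n]}) : g \is @ishomog1 n F 1 mdeg ->
  ent T (p * g) = (\sum_(k in T) g@_U_(k) *: 'X_k) * ent T p
     + \sum_(k in T) g@_U_(k) *: ent (T :\ k) p.
Proof.
move=> hg; rewrite {1}(homog1E hg) mulr_sumr ent_sum.
under eq_bigr => k _ do rewrite -scalerAr entZ ent_mulX.
rewrite mulr_suml -big_split /= (bigID (fun k => k \in T)) /=.
rewrite [X in _ + X]big1 ?addr0; last by move=> k /negbTE ->; rewrite scaler0.
by apply: eq_bigr => k ->; rewrite scalerDr scalerAl.
Qed.

Lemma meval_ent_mul T (p g : {mpoly F[n]}) S : g \is @ishomog1 n F 1 mdeg ->
  meval S (ent T (p * g)) = (\sum_(k in T) g@_U_(k) * S k) * meval S (ent T p)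
     + \sum_(k in T) g@_U_(k) * meval S (ent (T :\ k) p).
Proof.
move=> hg; rewrite ent_mul_lin // mevalD mevalM !raddf_sum /=.
congr (_ * _ + _); apply: eq_bigr => k _; by rewrite mevalZ ?mevalXU.
Qed.
End Gen2.

Section Spec.
Variables (F : fieldType) (m : nat).
Implicit Types (A B : {set 'I_m}) (f g : {mpoly F[m + m]}).

Lemma pcm_entryE f A B : pcm_entry f A B = ent (pqvars A B) f.
Proof.
rewrite /pcm_entry /ent big_mkcond; apply: eq_bigr => mu _.
by rewrite /EE; case: ifP; rewrite ?scaler0.
Qed.

Lemma in_ll x A : (@lshift m m x \in @lshift m m @: A) = (x \in A).
Proof. exact: mem_imset (@lshift_inj m m). Qed.
Lemma in_rr x A : (@rshift m m x \in @rshift m m @: A) = (x \in A).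
Proof. exact: mem_imset (@rshift_inj m m). Qed.
Lemma in_lr x A : (@lshift m m x \in @rshift m m @: A) = false.
Proof. by apply/imsetP => -[y _ /eqP]; rewrite eq_lrshift. Qed.
Lemma in_rl x A : (@rshift m m x \in @lshift m m @: A) = false.
Proof. by apply/imsetP => -[y _ /eqP]; rewrite eq_sym eq_lrshift. Qed.

Lemma pqvarsD1l A B x : pqvars (A :\ x) B = pqvars A B :\ @lshift m m x.
Proof.
apply/setP => k; rewrite -(splitK k); case: (split k) => j /=;
rewrite /pqvars !inE ?in_ll ?in_rr ?in_lr ?in_rl ?inE ?orbF ?andbF //=.
all: by rewrite ?(inj_eq (@lshift_inj m m)) ?(inj_eq (@rshift_inj m m)) ?eq_lrshift // eq_sym eq_lrshift.
Qed.

Lemma pqvarsD1r A B x : pqvars A (B :\ x) = pqvars A B :\ @rshift m m x.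
Proof.
apply/setP => k; rewrite -(splitK k); case: (split k) => j /=;
rewrite /pqvars !inE ?in_ll ?in_rr ?in_lr ?in_rl ?inE ?orbF ?andbF //=.
all: by rewrite ?(inj_eq (@lshift_inj m m)) ?(inj_eq (@rshift_inj m m)) ?eq_lrshift // eq_sym eq_lrshift.
Qed.

Lemma sum_pqvars A B (h : 'I_(m + m) -> F) :
  \sum_(k in pqvars A B) h k = \sum_(x in A) h (@lshift m m x) + \sum_(y in B) h (@rshift m m y).
Proof.
rewrite /pqvars (@eq_bigl _ _ _ _ _ _ [predU (@lshift m m @: A) & (@rshift m m @: B)]);
  last by move=> k; rewrite !inE.
rewrite bigU /=; last first.
  apply/pred0P => k /=; rewrite -(splitK k); case: (split k) => j /=;
  by rewrite ?in_ll ?in_rr ?in_lr ?in_rl ?andbF.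
rewrite !big_imset //= => x y _ _; [exact: (@rshift_inj m m) | exact: (@lshift_inj m m)].
Qed.
End Spec.

Lemma sum_deltal (R : pzRingType) (I : finType) (i : I) (h : I -> R) :
  \sum_j ((i == j)%:R * h j) = h i.
Proof.
rewrite (bigD1 i) //= eqxx mul1r big1 ?addr0 // => j ji.
by rewrite eq_sym (negbTE ji) mul0r.
Qed.
Lemma sum_deltar (R : pzRingType) (I : finType) (i : I) (h : I -> R) :
  \sum_j ((j == i)%:R * h j) = h i.
Proof. by rewrite -(sum_deltal i h); apply: eq_bigr => j _; rewrite eq_sym. Qed.

Section Mat.
Variables (F : fieldType) (m : nat) (f g : {mpoly F[m + m]}) (S : 'I_(m + m) -> F).
Hypothesis hg : g \is @ishomog1 (m + m) F 1 mdeg.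

Definition ev (i : 'I_(nmon m)) : {set 'I_m} := enum_val (i : 'I_#|{: {set 'I_m}}|).
Definition Ment (A B : {set 'I_m}) : F := meval S (ent (pqvars A B) f).
Definition cc (k : 'I_(m + m)) : F := g@_U_(k).
Definition aa (A : {set 'I_m}) : F := \sum_(x in A) cc (@lshift m m x) * S (@lshift m m x).
Definition bb (B : {set 'I_m}) : F := \sum_(y in B) cc (@rshift m m y) * S (@rshift m m y).

Lemma pcm_eval_E i j : pcm_eval f S i j = Ment (ev i) (ev j).
Proof. by rewrite /pcm_eval mxE /pcm mxE pcm_entryE. Qed.

Lemma Mfg_entry i j : pcm_eval (f * g) S i j =
  (aa (ev i) + bb (ev j)) * pcm_eval f S i j
  + \sum_(x in ev i) cc (@lshift m m x) * Ment (ev i :\ x) (ev j)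
  + \sum_(y in ev j) cc (@rshift m m y) * Ment (ev i) (ev j :\ y).
Proof.
rewrite pcm_eval_E /pcm_eval mxE /pcm mxE pcm_entryE meval_ent_mul // !sum_pqvars.
rewrite -addrA; congr (_ + (_ + _)); apply: eq_bigr => x _.
  by rewrite /Ment pqvarsD1l.
by rewrite /Ment pqvarsD1r.
Qed.

Lemma ev_rank X : ev (enum_rank X) = X.
Proof. exact: enum_rankK. Qed.

Definition Pm : 'M[F]_(nmon m) := \matrix_(i, i')
  ((i == i')%:R * aa (ev i) + \sum_(x in ev i) cc (@lshift m m x) * (i' == enum_rank (ev i :\ x))%:R).
Definition Qm : 'M[F]_(nmon m) := \matrix_(j', j)
  ((j' == j)%:R * bb (ev j) + \sum_(y in ev j) cc (@rshift m m y) * (j' == enum_rank (ev j :\ y))%:R).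

Lemma PM i j : (Pm *m pcm_eval f S) i j =
  aa (ev i) * pcm_eval f S i j + \sum_(x in ev i) cc (@lshift m m x) * Ment (ev i :\ x) (ev j).
Proof.
rewrite mxE.
under eq_bigr => i' _ do rewrite mxE mulrDl big_distrl /=.
rewrite big_split /=; congr (_ + _).
  by rewrite -(sum_deltal i (fun i' => aa (ev i) * pcm_eval f S i' j));
     apply: eq_bigr => i' _; rewrite mulrA.
rewrite exchange_big /=; apply: eq_bigr => x _.
rewrite (eq_bigr (fun i' => cc (@lshift m m x) *
   ((i' == enum_rank (ev i :\ x))%:R * pcm_eval f S i' j))); last first.
  by move=> i' _; rewrite mulrA.
by rewrite -mulr_sumr sum_deltar pcm_eval_E ev_rank.
Qed.

Lemma MQ i j : (pcm_eval f S *m Qm) i j =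
  bb (ev j) * pcm_eval f S i j + \sum_(y in ev j) cc (@rshift m m y) * Ment (ev i) (ev j :\ y).
Proof.
rewrite mxE.
under eq_bigr => j' _ do rewrite [Qm _ _]mxE mulrDr [pcm_eval _ _ _ _ * \sum_(_ in _) _]big_distrr /=.
rewrite big_split /=; congr (_ + _).
  rewrite -(sum_deltar j (fun j' => bb (ev j) * pcm_eval f S i j')).
  by apply: eq_bigr => j' _; rewrite [LHS]mulrC -mulrA.
rewrite exchange_big /=; apply: eq_bigr => y _.
rewrite (eq_bigr (fun j' => cc (@rshift m m y) *
   ((j' == enum_rank (ev j :\ y))%:R * pcm_eval f S i j'))); last first.
  by move=> j' _; rewrite mulrCA; congr (_ * _); exact: mulrC.
by rewrite -mulr_sumr sum_deltar pcm_eval_E ev_rank.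
Qed.

Lemma Mfg_decomp : pcm_eval (f * g) S = Pm *m pcm_eval f S + pcm_eval f S *m Qm.
Proof.
apply/matrixP => i j; rewrite [RHS]mxE PM MQ Mfg_entry.
rewrite mulrDl; set u := aa _ * _; set v := bb _ * _.
set X := \sum_(x in _) _; set Y := \sum_(y in _) _.
by rewrite -!addrA; congr (_ + _); rewrite addrC -!addrA; congr (_ + _); rewrite addrC.
Qed.

Lemma rank_fg : (\rank (pcm_eval (f * g) S) <= 2 * \rank (pcm_eval f S))%N.
Proof.
rewrite Mfg_decomp mul2n -addnn.
apply: leq_trans (mxrank_add _ _) _.
by apply: leq_add; [apply: mxrankM_maxr | apply: mxrankM_maxl].
Qed.
End Mat.

Unset Implicit Arguments.
Theorem corollary1 (F : fieldType) (m : nat) (f g : {mpoly F[m + m]}) :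
  g \is @ishomog1 (m + m) F 1 mdeg ->
  (maxrank (f * g) <= 2 * maxrank f)%N.
Proof.
move=> hg; rewrite /maxrank; apply/bigmax_leqP => r.
rewrite /attained; case: excluded_middle_informative => // -[S hS] _.
rewrite -hS; apply: leq_trans (rank_fg f S hg) _.
rewrite leq_mul2l /=.
have hr : (\rank (pcm_eval f S) < (nmon m).+1)%N by rewrite ltnS rank_leq_row.
apply: (@leq_bigmax_cond _ _ (fun r : 'I_(nmon m).+1 => nat_of_ord r) (Ordinal hr)).
rewrite /attained; case: excluded_middle_informative => // -[]; by exists S.
Qed.
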